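(* Suppose $\mathcal X$ is convex and $x\mapsto\ell(x,i)$ is convex for each $i\in\Sigma$. Let $\mathbb Q\in\mathcal P$ and $\alpha>0$ satisfy $\sqrt{2\alpha}\le\min_{i\in\Sigma}\mathbb Q(i)\cdot\min_{i\in\Sigma}\min(\mathbb Q(i),1-\mathbb Q(i))$. Then $x\mapsto c(x,\mathbb Q)+\sqrt{2\alpha\,\mathrm{Var}_{\mathbb Q}(\ell(x,\xi))}$ is convex on $\mathcal X$. (In particular this applies with $\mathbb Q=\hat{\mathbb P}_T$ and $\alpha=a_T/T$.)
   Context: $\Sigma=\{1,\dots,d\}$ ($d\ge2$) finite, $\mathcal P$ the probability simplex; $\mathcal X\subset\mathbb R^n$ compact; $\ell:\mathcal X\times\Sigma\to\mathbb R$. $c(x,\mathbb Q)=\sum_i\ell(x,i)\mathbb Q(i)$ and $\mathrm{Var}_{\mathbb Q}(\ell(x,\xi))=\sum_i\mathbb Q(i)(\ell(x,i)-c(x,\mathbb Q))^2$. $\hat{\mathbb P}_T$ denotes the empirical distribution of $T$ observed samples and $(a_T)$ a positive sequence. *)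

(* Defs.v *)
From HB Require Import structures.
From mathcomp Require Import all_boot all_order all_algebra.
From mathcomp Require Import all_classical all_reals all_analysis.
Set Implicit Arguments. Unset Strict Implicit. Unset Printing Implicit Defensive.
Import Order.TTheory GRing.Theory Num.Theory.
Local Open Scope ring_scope.
Local Open Scope classical_set_scope.

Definition convex_setR (R : realType) (n : nat) (X : set 'rV[R]_n) : Prop :=
  forall x y, X x -> X y -> forall t : R, 0 <= t -> t <= 1 ->
    X (t *: x + (1 - t) *: y).

Definition convex_onR (R : realType) (n : nat) (X : set 'rV[R]_n)
  (f : 'rV[R]_n -> R) : Prop :=
  forall x y, X x -> X y -> forall t : R, 0 <= t -> t <= 1 ->
    f (t *: x + (1 - t) *: y) <= t * f x + (1 - t) * f y.

(* Q is in the probability simplex over Sigma = 'I_d. *)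
Definition is_prob (R : realType) (d : nat) (Q : 'I_d -> R) : Prop :=
  (forall i, 0 <= Q i) /\ \sum_(i < d) Q i = 1.

Definition cost (R : realType) (n d : nat) (l : 'rV[R]_n -> 'I_d -> R)
  (x : 'rV[R]_n) (Q : 'I_d -> R) : R :=
  \sum_(i < d) l x i * Q i.

Definition varQ (R : realType) (n d : nat) (l : 'rV[R]_n -> 'I_d -> R)
  (x : 'rV[R]_n) (Q : 'I_d -> R) : R :=
  \sum_(i < d) Q i * (l x i - cost l x Q) ^+ 2.

(* Main.v *)
Require Import Defs.
From HB Require Import structures.
From mathcomp Require Import all_boot all_order all_algebra.
From mathcomp Require Import all_classical all_reals all_analysis.
From mathcomp Require Import ring lra.
Import Order.TTheory GRing.Theory Num.Theory.
Import numFieldNormedType.Exports.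
Local Open Scope ring_scope.
Local Open Scope classical_set_scope.

Section Aux.
Variables (R : realType) (d : nat) (Q : 'I_d -> R).
Hypothesis Q0 : forall i, 0 <= Q i.
Hypothesis Q1 : \sum_(i < d) Q i = 1.

Definition cs (a : 'I_d -> R) := \sum_(i < d) a i * Q i.
Definition vr (a : 'I_d -> R) := \sum_(i < d) Q i * (a i - cs a) ^+ 2.

Lemma CS (p q : 'I_d -> R) : 0 < \sum_(i < d) Q i * q i ^+ 2 ->
  (\sum_(i < d) Q i * p i * q i) ^+ 2 <=
  (\sum_(i < d) Q i * p i ^+ 2) * (\sum_(i < d) Q i * q i ^+ 2).
Proof.
set A := \sum_(i < d) Q i * p i ^+ 2.
set B := \sum_(i < d) Q i * q i ^+ 2.
set C := \sum_(i < d) Q i * p i * q i.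
move=> Bpos.
set L := C / B.
have LB : L * B = C by rewrite /L mulfVK // gt_eqF.
have H : 0 <= \sum_(i < d) Q i * (p i - L * q i) ^+ 2.
  by apply: sumr_ge0 => i _; rewrite mulr_ge0 // sqr_ge0.
have E : \sum_(i < d) Q i * (p i - L * q i) ^+ 2 =
   A - (2 * L) * C + (L ^+ 2) * B.
  rewrite /A /B /C.
  rewrite (eq_bigr (fun i => Q i * p i ^+ 2 - (2 * L) * (Q i * p i * q i)
     + L ^+ 2 * (Q i * q i ^+ 2))); last by move=> i _; ring.
  by rewrite big_split /= sumrB -!mulr_sumr.
rewrite E in H.
have : L * C <= A by nra.
move=> HLC.
have -> : C ^+ 2 = (L * C) * B by rewrite -LB; ring.
by rewrite ler_wpM2r // ltW.
Qed.

Lemma lerDl_tmp (x : R) (F : 'I_d -> R) (P : pred 'I_d) :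
  (forall j, 0 <= F j) -> x <= x + \sum_(j < d | P j) F j.
Proof. by move=> H; rewrite lerDl sumr_ge0. Qed.

Lemma key (b t : R) (z u w : 'I_d -> R) :
  0 <= b -> (forall i, b ^+ 2 <= Q i) -> 0 <= t -> t <= 1 ->
  (forall i, z i <= t * u i + (1 - t) * w i) ->
  cs z + b * Num.sqrt (vr z) <=
  t * (cs u + b * Num.sqrt (vr u)) + (1 - t) * (cs w + b * Num.sqrt (vr w)).
Proof.
move=> b0 bQ t0 t1 zle.
have csv : forall a a' : 'I_d -> R,
   \sum_(i < d) (t * a i + (1 - t) * a' i) * Q i = t * cs a + (1 - t) * cs a'.
  move=> a a'; rewrite /cs !mulr_sumr -big_split /=.
  by apply: eq_bigr => i _; ring.
have csle : cs z <= t * cs u + (1 - t) * cs w.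
  rewrite -csv /cs; apply: ler_sum => i _; exact: ler_wpM2r.
have S0 : 0 <= vr z by apply: sumr_ge0 => i _; rewrite mulr_ge0 // sqr_ge0.
have su0 := sqrtr_ge0 (vr u); have sw0 := sqrtr_ge0 (vr w).
have [Sz|Spos] := eqVneq (vr z) 0.
  rewrite Sz sqrtr0 mulr0 addr0.
  have : 0 <= t * (b * Num.sqrt (vr u)) + (1 - t) * (b * Num.sqrt (vr w)).
    by rewrite addr_ge0 // !mulr_ge0 // subr_ge0.
  lra.
have Sp : 0 < vr z by rewrite lt_def Spos S0.
set c := cs z.
set e := fun i => z i - c.
set s := Num.sqrt (vr z).
have sp : 0 < s by rewrite sqrtr_gt0.
have ss : s ^+ 2 = vr z by rewrite sqr_sqrtr.
have sumQ : forall a : 'I_d -> R, \sum_(i < d) Q i * (a i - cs a) = 0.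
  move=> a; rewrite (eq_bigr (fun i => a i * Q i - cs a * Q i));
    last by move=> i _; ring.
  by rewrite sumrB -mulr_sumr Q1 mulr1 /cs subrr.
have sumQe : \sum_(i < d) Q i * e i = 0 by exact: sumQ.
have shift : forall a : 'I_d -> R,
   \sum_(i < d) Q i * a i * e i = \sum_(i < d) Q i * (a i - cs a) * e i.
  move=> a; rewrite (eq_bigr (fun i => Q i * (a i - cs a) * e i + cs a * (Q i * e i)));
    last by move=> i _; ring.
  by rewrite big_split /= -mulr_sumr sumQe mulr0 addr0.
have bnd : forall a : 'I_d -> R,
   \sum_(i < d) Q i * a i * e i <= Num.sqrt (vr a) * s.
  move=> a; rewrite shift.
  apply: (le_trans (ler_norm _)).
  rewrite -sqrtr_sqr /s -sqrtrM; last by apply: sumr_ge0 => i _; rewrite mulr_ge0 // sqr_ge0.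
  rewrite ler_sqrt; last by rewrite mulr_ge0 // sumr_ge0 // => i _; rewrite mulr_ge0 // sqr_ge0.
  exact: CS.
have zeS : \sum_(i < d) Q i * z i * e i = vr z.
  by rewrite shift /vr; apply: eq_bigr => i _; rewrite /e /c; ring.
have epos : forall i, 0 <= s + b * e i.
  move=> i.
  have h1 : Q i * e i ^+ 2 <= vr z.
    rewrite /vr (bigD1 i) //=.
    by apply: lerDl_tmp => j; rewrite mulr_ge0 // sqr_ge0.
  have h2 : b ^+ 2 * e i ^+ 2 <= Q i * e i ^+ 2 by rewrite ler_wpM2r // sqr_ge0.
  have h3 : (b * e i) ^+ 2 <= s ^+ 2 by rewrite ss exprMn; exact: le_trans h2 h1.
  nra.
have main : \sum_(i < d) Q i * z i * (s + b * e i) <=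
            \sum_(i < d) Q i * (t * u i + (1 - t) * w i) * (s + b * e i).
  apply: ler_sum => i _; rewrite ler_wpM2r // ler_wpM2l //.
have Lz : \sum_(i < d) Q i * z i * (s + b * e i) = s * c + b * vr z.
  rewrite -zeS /c /cs mulr_sumr mulr_sumr -big_split /=.
  by apply: eq_bigr => i _; ring.
have Rv : \sum_(i < d) Q i * (t * u i + (1 - t) * w i) * (s + b * e i) =
   t * s * cs u + t * b * (\sum_(i < d) Q i * u i * e i)
   + ((1 - t) * s * cs w + (1 - t) * b * (\sum_(i < d) Q i * w i * e i)).
  rewrite /cs !mulr_sumr -!big_split /=.
  by apply: eq_bigr => i _; ring.
rewrite Lz Rv in main.
have bu := bnd u; have bw := bnd w.
have p1 : t * b * (\sum_(i < d) Q i * u i * e i) <= t * b * (Num.sqrt (vr u) * s).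
  by rewrite ler_wpM2l // mulr_ge0.
have p2 : (1 - t) * b * (\sum_(i < d) Q i * w i * e i) <= (1 - t) * b * (Num.sqrt (vr w) * s).
  by rewrite ler_wpM2l // mulr_ge0 // subr_ge0.
rewrite -(ler_pM2l sp).
rewrite -ss in main.
have : s * (c + b * s) = s * c + b * s ^+ 2 by ring.
have : s * (t * (cs u + b * Num.sqrt (vr u)) + (1 - t) * (cs w + b * Num.sqrt (vr w)))
  = t * s * cs u + t * b * (Num.sqrt (vr u) * s) + ((1 - t) * s * cs w + (1 - t) * b * (Num.sqrt (vr w) * s)) by ring.
lra.
Qed.

End Aux.

Theorem mainTheorem15 (R : realType) (n d : nat) (hd : (2 <= d)%N)
  (X : set 'rV[R]_n) (l : 'rV[R]_n -> 'I_d -> R)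
  (hXc : compact X) (hXconv : convex_setR X)
  (hl : forall i : 'I_d, convex_onR X (fun x => l x i))
  (Q : 'I_d -> R) (hQ : is_prob Q) (alpha : R) (halpha : 0 < alpha)
  (hcond : Num.sqrt (2 * alpha) <=
     (\big[Order.min/1]_(i < d) Q i) *
     (\big[Order.min/1]_(i < d) Order.min (Q i) (1 - Q i))) :
  convex_onR X (fun x => cost l x Q + Num.sqrt (2 * alpha * varQ l x Q)).
Proof.
case: hQ => Q0 Q1.
set b := Num.sqrt (2 * alpha).
have a0 : 0 <= 2 * alpha by rewrite mulr_ge0 // ltW.
have b0 : 0 <= b := sqrtr_ge0 _.
set s := \big[Order.min/1]_(i < d) Q i.
set m := \big[Order.min/1]_(i < d) Order.min (Q i) (1 - Q i).
have sQ : forall i, s <= Q i by move=> i; exact: bigmin_le.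
have s1 : s <= 1 by exact: bigmin_le_id.
have m1 : m <= 1 by exact: bigmin_le_id.
have s0 : 0 <= s by apply: le_bigmin => // i _.
have bs : b <= s.
  apply: (le_trans hcond); rewrite /s /m -/s -/m.
  by rewrite -[X in _ <= X](mulr1 s); apply: ler_wpM2l.
have bQ : forall i, b ^+ 2 <= Q i.
  move=> i; apply: (le_trans _ (sQ i)).
  have : b <= 1 by exact: le_trans bs s1.
  move=> b1; rewrite expr2; apply: (le_trans _ bs).
  by rewrite -[X in _ <= X](mul1r b); apply: ler_wpM2r.
move=> x y Xx Xy t t0 t1.
have E : forall z, cost l z Q + Num.sqrt (2 * alpha * varQ l z Q) =
   @cs R d Q (l z) + b * Num.sqrt (@vr R d Q (l z)).
  by move=> z; rewrite sqrtrM.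
rewrite !E.
apply: key => // i.
exact: hl.
Qed.
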